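(* The polynomial $\mathbf{p}_t$ is a well-defined invariant of (oriented) virtual knots, and it is a Vassiliev invariant of degree one for virtual knots (with values in the abelian group $\mathbf{Z}[t]$).
   Context: A virtual knot diagram is an oriented closed curve immersed in the plane with finitely many transverse double points, each either a classical crossing (with over/under information) or a virtual crossing (encircled, carrying no over/under information). Virtual knots are equivalence classes of such diagrams under the classical Reidemeister moves and the virtual Reidemeister moves (moves V1, V2, V3 involving only virtual crossings, and the mixed move in which a strand containing only virtual crossings passes across a classical crossing). The sign $\operatorname{sign}(d)\in\{\pm1\}$ of a classical crossing $d$ is $+1$ if the pair (direction of over-strand, direction of under-strand) is a positively oriented basis of the plane, and $-1$ otherwise. Smoothing a diagram at a classical crossing $d$ means replacing $d$ by two non-crossing arcs in the unique way respecting orientations; this yields a two-component virtual link diagram. Order its components as $(1,2)$, forget over/under data, and set $i(d)=\sum_{x\in 1\cap 2}\operatorname{sgn}(x)$, where $1\cap 2$ is the set of classical crossings between the two components and $\operatorname{sgn}(x)=+1$ if (tangent of component 1, tangent of component 2) at $x$ is positively oriented, $-1$ otherwise; $|i(d)|$ does not depend on the ordering. For a virtual knot $K$ with diagram $\widetilde K$, $\mathbf{p}_t(K)=\sum_d \operatorname{sign}(d)\,(t^{|i(d)|}-1)\in\mathbf{Z}[t]$, summed over all classical crossings $d$ of $\widetilde K$. Singular virtual knots are virtual knots with finitely many additional transverse self-intersection points (double-points), considered up to the classical and virtual Reidemeister moves together with the standard moves involving double-points. Any invariant $V$ of virtual knots with values in an abelian group $A$ extends to singular virtual knots by the recursion $V(K)=V(K^+)-V(K^-)$,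 where $K^\pm$ is obtained by resolving a chosen double-point of $K$ into a positive, resp. negative, classical crossing (the result is independent of the order of resolution). $V$ is a Vassiliev invariant of degree $\le n$ if it vanishes on all singular virtual knots with more than $n$ double-points; the degree is the smallest such $n$. *)

(* Defs.v *)
From mathcomp Require Import all_boot all_order all_algebra.
From Stdlib Require Import Relations.
Set Implicit Arguments. Unset Strict Implicit. Unset Printing Implicit Defensive.
Import Order.TTheory GRing.Theory Num.Theory.
Local Open Scope ring_scope.

(* One passage of the knot through a classical crossing:
   [lab] = name of the crossing, [over] = the knot passes over here,
   [pos] = the crossing has sign +1 (stored at both passages). *)
Record passage := Pass { lab : nat; over : bool; pos : bool }.

(* A (signed) Gauss code: the sequence of classical crossings met when
   travelling once along the oriented knot from a base point.  Virtual
   crossings are not recorded. *)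
Definition gcode := seq passage.

Definition labels (D : gcode) : seq nat := map lab D.

Definition wf (D : gcode) : Prop :=
  forall d, d \in labels D ->
    exists s, count (fun e => (lab e == d) && over e && (pos e == s)) D = 1%N /\
              count (fun e => (lab e == d) && ~~ over e && (pos e == s)) D = 1%N /\
              count (fun e => lab e == d) D = 2%N.

(* Virtual moves (V1-V3 and the mixed move) do not change the Gauss code. *)

Definition R1 (D D' : gcode) : Prop :=
  exists u v d o s,
    D = u ++ [:: Pass d o s; Pass d (~~ o) s] ++ v /\ D' = u ++ v /\
    d \notin labels (u ++ v).

(* R2: one strand passes over two crossings c, e of opposite signs that are
   passed consecutively (in either order) by a second strand *)
Definition R2 (D D' : gcode) : Prop :=
  exists u v w x c e s,
    D = u ++ [:: Pass c true s; Pass e true (~~ s)] ++ v ++ w ++ x /\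
    (w = [:: Pass c false s; Pass e false (~~ s)] \/
     w = [:: Pass e false (~~ s); Pass c false s]) /\
    D' = u ++ v ++ x /\ c != e /\
    c \notin labels (u ++ v ++ x) /\ e \notin labels (u ++ v ++ x).

(* R3: top strand T, middle strand M, bottom strand B; crossing a = (T over M),
   b = (T over B), c = (M over B).  The booleans tT, tM, tB record whether,
   along T (resp. M, B), a is met before b (resp. a before c, b before c).
   A configuration is a genuine R3 triangle iff
   tT (+) tM = sb (+) sc  and  tM (+) tB = sa (+) sb;
   the move reverses the order along each of the three strands. *)
Definition segT (a b : nat) (sa sb tT : bool) : gcode :=
  if tT then [:: Pass a true sa; Pass b true sb]
  else [:: Pass b true sb; Pass a true sa].
Definition segM (a c : nat) (sa sc tM : bool) : gcode :=
  if tM then [:: Pass a false sa; Pass c true sc]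
  else [:: Pass c true sc; Pass a false sa].
Definition segB (b c : nat) (sb sc tB : bool) : gcode :=
  if tB then [:: Pass b false sb; Pass c false sc]
  else [:: Pass c false sc; Pass b false sb].

Definition R3 (D D' : gcode) : Prop :=
  exists u1 u2 u3 u4 a b c sa sb sc tT tM tB,
    (tT (+) tM = sb (+) sc) /\ (tM (+) tB = sa (+) sb) /\
    ((D = u1 ++ segT a b sa sb tT ++ u2 ++ segM a c sa sc tM ++ u3
             ++ segB b c sb sc tB ++ u4 /\
      D' = u1 ++ segT a b sa sb (~~ tT) ++ u2 ++ segM a c sa sc (~~ tM) ++ u3
             ++ segB b c sb sc (~~ tB) ++ u4) \/
     (D = u1 ++ segT a b sa sb tT ++ u2 ++ segB b c sb sc tB ++ u3
             ++ segM a c sa sc tM ++ u4 /\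
      D' = u1 ++ segT a b sa sb (~~ tT) ++ u2 ++ segB b c sb sc (~~ tB) ++ u3
             ++ segM a c sa sc (~~ tM) ++ u4)).

(* change of base point and renaming of crossings *)
Definition Rot (D D' : gcode) : Prop := D' = rot 1 D.
Definition Relab (D D' : gcode) : Prop :=
  exists f : nat -> nat, injective f /\
    D' = map (fun e => Pass (f (lab e)) (over e) (pos e)) D.

Definition move (D D' : gcode) : Prop :=
  R1 D D' \/ R2 D D' \/ R3 D D' \/ Rot D D' \/ Relab D D'.

(* equivalence of diagrams = same virtual knot *)
Definition vequiv : relation gcode := clos_refl_sym_trans gcode move.

Definition sgnz (e : passage) : int := if pos e then 1 else -1.

(* the arc of the knot strictly between the two passages through d *)
Definition arc (D : gcode) (d : nat) : gcode :=
  let p := index d (labels D) in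
  take (index d (drop p.+1 (labels D))) (drop p.+1 D).

(* i(d): sum over crossings x between the two components obtained by smoothing
   at d of sgn(x) = sign of (tangent of component 1, tangent of component 2),
   component 1 being the arc [arc D d].  sgn(x) = sign(x) if component 1 is
   the over strand at x, and -sign(x) otherwise. *)
Definition ind (D : gcode) (d : nat) : int :=
  let A := arc D d in
  \sum_(e <- A | count (fun e' => lab e' == lab e) A == 1%N)
     (if over e then sgnz e else - sgnz e).

Definition pt (D : gcode) : {poly int} :=
  \sum_(e <- D | over e) (sgnz e)%:~R * ('X^(absz (ind D (lab e))) - 1).

Definition cchange (d : nat) (D : gcode) : gcode :=
  map (fun e => if lab e == d then Pass d (~~ over e) (~~ pos e) else e) D.

(* resolution of the double point d into a crossing of sign b
   (a double point is represented by either of its two resolutions) *)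
Definition resolve (b : bool) (d : nat) (D : gcode) : gcode :=
  if has (fun e => (lab e == d) && (pos e == b)) D then D else cchange d D.

(* extension to singular diagrams (double points = the labels in M) by
   V(K) = V(K+) - V(K-) *)
Fixpoint vext (A : zmodType) (V : gcode -> A) (D : gcode) (M : seq nat) : A :=
  match M with
  | [::] => V D
  | d :: M' => vext V (resolve true d D) M' - vext V (resolve false d D) M'
  end.

Definition vassiliev_le (A : zmodType) (V : gcode -> A) (n : nat) : Prop :=
  forall (D : gcode) (M : seq nat), wf D -> uniq M ->
    all (fun d => d \in labels D) M -> (n < size M)%N -> vext V D M = 0.

Definition vk_invariant (A : Type) (V : gcode -> A) : Prop :=
  forall D D' : gcode, wf D -> wf D' -> vequiv D D' -> V D = V D'.

(* Main.v *)
Require Import Defs.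
From HB Require Import structures.
From mathcomp Require Import all_boot all_order all_algebra.
From mathcomp Require Import zify ring lra.
Import Defs.
Set Implicit Arguments. Unset Strict Implicit. Unset Printing Implicit Defensive.
Import Order.TTheory GRing.Theory Num.Theory.
Local Open Scope ring_scope.

Definition pass_enc (e : passage) := (lab e, over e, pos e).
Definition pass_dec (t : nat * bool * bool) := Pass t.1.1 t.1.2 t.2.
Lemma pass_encK : cancel pass_enc pass_dec. Proof. by case. Qed.
HB.instance Definition _ := Countable.copy passage (can_type pass_encK).

Definition w (e : passage) : int := if over e then sgnz e else - sgnz e.
Definition Wsum (A : gcode) : int := \sum_(e <- A) w e.
Definition pre (x : nat) (s : gcode) : gcode := take (index x (labels s)) s.
Arguments pre : simpl never.

Lemma pre_nil x : pre x [::] = [::].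
Proof. by []. Qed.
Lemma pre_cons x e s : pre x (e :: s) = if lab e == x then [::] else e :: pre x s.
Proof. by rewrite /pre /=; case: eqP. Qed.
Lemma arc_nil x : arc [::] x = [::].
Proof. by []. Qed.
Lemma arc_cons x e s : arc (e :: s) x = if lab e == x then pre x s else arc s x.
Proof. by rewrite /arc /pre /=; case: eqP => //= _; rewrite !drop0. Qed.

Lemma arc_catl x u s : x \notin labels u -> arc (u ++ s) x = arc s x.
Proof.
elim: u => //= e u IH; rewrite inE negb_or => /andP[ne nu].
by rewrite arc_cons eq_sym (negbTE ne) IH.
Qed.
Lemma pre_catl x u s : x \notin labels u -> pre x (u ++ s) = u ++ pre x s.
Proof.
elim: u => //= e u IH; rewrite inE negb_or => /andP[ne nu].
by rewrite pre_cons eq_sym (negbTE ne) IH.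
Qed.
Lemma pre_catr x u s : x \in labels u -> pre x (u ++ s) = pre x u.
Proof.
elim: u => //= e u IH; rewrite inE => H.
rewrite !pre_cons; case: eqP => //= ne; rewrite IH //.
by move: H; rewrite eq_sym; case: eqP.
Qed.

Lemma arc_ins u v x : exists w1 w2 (b : bool), forall B, x \notin labels B ->
  arc (u ++ B ++ v) x = w1 ++ (if b then B else [::]) ++ w2.
Proof.
elim: u => [|e u IH] /=.
  by exists (arc v x), [::], false; move=> B nB; rewrite arc_catl // /= cats0.
case: (eqVneq (lab e) x) => [ex|nex].
  case: (boolP (x \in labels u)) => xu.
    exists (pre x u), [::], false; move=> B nB.
    by rewrite arc_cons ex eqxx pre_catr // /= cats0.
  exists u, (pre x v), true; move=> B nB.
  by rewrite arc_cons ex eqxx pre_catl // pre_catl.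
have [w1 [w2 [b H]]] := IH; exists w1, w2, b; move=> B nB.
by rewrite arc_cons (negbTE nex) H.
Qed.

Lemma Wsum_cat A B : Wsum (A ++ B) = Wsum A + Wsum B.
Proof. by rewrite /Wsum big_cat. Qed.
Lemma Wsum_cons e A : Wsum (e :: A) = w e + Wsum A.
Proof. by rewrite /Wsum big_cons. Qed.
Lemma Wsum_nil : Wsum [::] = 0.
Proof. by rewrite /Wsum big_nil. Qed.

Lemma arc_Wsum u v B B' x : x \notin labels B -> x \notin labels B' ->
  Wsum B = Wsum B' -> Wsum (arc (u ++ B ++ v) x) = Wsum (arc (u ++ B' ++ v) x).
Proof.
move=> nB nB' eW; have [w1 [w2 [b H]]] := arc_ins u v x.
rewrite !H // !Wsum_cat; case: (b) => //; by rewrite eW.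
Qed.

Lemma cnt_labels z s : count (fun e => lab e == z) s = count_mem z (labels s).
Proof. by rewrite count_map; apply: eq_count. Qed.
Lemma cnt0 z s : (count (fun e => lab e == z) s == 0%N) = (z \notin labels s).
Proof. by rewrite cnt_labels; apply/eqP/count_memPn. Qed.
Lemma cnt_gt0 z s : (0 < count (fun e => lab e == z) s)%N = (z \in labels s).
Proof. by rewrite lt0n cnt0 negbK. Qed.

Lemma labels_cat (a b : gcode) : labels (a ++ b) = labels a ++ labels b.
Proof. exact: map_cat. Qed.

Definition indA (A : gcode) : int :=
  \sum_(e <- A | count (fun e' => lab e' == lab e) A == 1%N) w e.

Definition PP (A : gcode) : Prop := forall z,
  (count (fun e => lab e == z) A <= 2)%N /\
  (count (fun e => lab e == z) A = 2%N -> \sum_(e <- A | lab e == z) w e = 0).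

Lemma sum_none z s : z \notin labels s -> \sum_(e <- s | lab e == z) w e = 0.
Proof.
move=> H; rewrite big_hasC // has_count; move: H; rewrite -cnt0 => /eqP ->.
by [].
Qed.

Lemma indA_perm (A B : gcode) : perm_eq A B -> indA A = indA B.
Proof.
move=> H; rewrite /indA (perm_big _ H) /=.
by apply: eq_bigl => e; rewrite (permP H).
Qed.

Lemma eq_bigl_in (r : seq passage) (P1 P2 : pred passage) (F : passage -> int) :
  {in r, P1 =1 P2} -> \sum_(i <- r | P1 i) F i = \sum_(i <- r | P2 i) F i.
Proof.
move=> H; rewrite big_seq_cond [RHS]big_seq_cond; apply: eq_bigl => i.
by case: (boolP (i \in r)) => //= /H ->.
Qed.

Lemma indA_cat (A B : gcode) : (forall z, z \in labels A -> z \notin labels B) ->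
  indA (A ++ B) = indA A + indA B.
Proof.
move=> dj; rewrite /indA big_cat /=; congr (_ + _); apply: eq_bigl_in => e eA.
- have: lab e \notin labels B by apply: dj; apply: map_f.
  by rewrite -cnt0 count_cat => /eqP ->; rewrite addn0.
- have: lab e \notin labels A.
    by apply/negP => /dj; rewrite (map_f lab eA).
  by rewrite -cnt0 count_cat => /eqP ->.
Qed.

Lemma split_lab z (s : gcode) : z \in labels s ->
  exists s1 e s2, s = s1 ++ e :: s2 /\ lab e = z /\ z \notin labels s1.
Proof.
elim: s => //= e s IH; rewrite inE; case: (eqVneq z (lab e)) => [->|ne] /= H.
  by exists [::], e, s.
have [s1 [e' [s2 [-> [le n1]]]]] := IH H.
by exists (e :: s1), e', s2; rewrite /= inE negb_or ne.
Qed.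

Lemma PP_perm (A B : gcode) : perm_eq A B -> PP A -> PP B.
Proof.
move=> H P z; rewrite -(permP H) -(perm_big _ H); exact: P.
Qed.

Lemma PP_catr (A B : gcode) : (forall z, z \in labels B -> z \notin labels A) ->
  PP (B ++ A) -> PP A.
Proof.
move=> dj P z; have [P1 P2] := P z.
case: (boolP (z \in labels B)) => zB.
  have := dj _ zB; rewrite -cnt0 => /eqP ->; split => // H; discriminate.
move: P1 P2; rewrite count_cat big_cat /= sum_none // add0r.
by move: zB; rewrite -cnt0 => /eqP ->.
Qed.

Lemma indA1 e : indA [:: e] = w e.
Proof. by rewrite /indA big_cons big_nil /= eqxx /= addr0. Qed.
Lemma indA2 e e' : lab e = lab e' -> indA [:: e; e'] = 0.
Proof. by move=> H; rewrite /indA !big_cons big_nil /= H eqxx. Qed.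

Lemma indA_Wsum (A : gcode) : PP A -> indA A = Wsum A.
Proof.
elim: {A}(size A) {-2}A (leqnn (size A)) => [|n IH] A.
  by case: A => // _ _; rewrite /indA /Wsum !big_nil.
case: A => [|e s] Hs P; first by rewrite /indA /Wsum !big_nil.
case: (boolP (lab e \in labels s)) => es; last first.
  have dj : forall z, z \in labels [:: e] -> z \notin labels s.
    by move=> z; rewrite inE => /eqP ->.
  rewrite -cat1s indA_cat // indA1 Wsum_cons IH //.
  exact: (PP_catr dj).
have [s1 [e' [s2 [se [le n1]]]]] := split_lab es.
have [P1 P2] := P (lab e).
have n2 : lab e \notin labels s2.
  move: P1; rewrite se /= eqxx count_cat /= le eqxx -cnt0 => H; apply/eqP.
  move: H; rewrite /nat_of_bool; lia.
have pe : perm_eq (e :: s) ([:: e; e'] ++ (s1 ++ s2)).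
  by rewrite se /= perm_cons -cat1s perm_catCA.
have dj : forall z, z \in labels [:: e; e'] -> z \notin labels (s1 ++ s2).
  move=> z; rewrite !inE le orbb => /eqP ->; by rewrite labels_cat mem_cat negb_or n1.
have P' := PP_perm pe P.
rewrite (indA_perm pe) indA_cat // indA2 // add0r.
rewrite /Wsum (perm_big _ pe) /= !big_cons -/(Wsum _) IH; last exact: (PP_catr dj).
  have := P2; rewrite (permP pe) (perm_big _ pe) /= !big_cons eqxx le eqxx.
  rewrite sum_none; last by rewrite labels_cat mem_cat negb_or n1 n2.
  rewrite addr0.
  have /eqP -> : count (fun e0 => lab e0 == lab e) (s1 ++ s2) == 0%N.
    by rewrite cnt0 labels_cat mem_cat negb_or n1 n2.
  by move=> H; rewrite addrA H // add0r.
by move: Hs; rewrite se size_cat /= size_cat addnS ltnS => /ltnW.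
Qed.

Lemma wf_cnt D d : wf D -> d \in labels D -> count (fun e => lab e == d) D = 2%N.
Proof. by move=> H /H [s [_ [_ ->]]]. Qed.

Lemma wf_pair D d : wf D -> d \in labels D ->
  exists x y, filter (fun e => lab e == d) D = [:: x; y] /\ lab x = d /\ lab y = d
    /\ over y = ~~ over x /\ pos y = pos x.
Proof.
move=> H dl; have [s [h1 [h2 h3]]] := H d dl.
have e1 : count (fun e => over e && (pos e == s)) (filter (fun e => lab e == d) D) = 1%N.
  rewrite count_filter -h1; apply: eq_count => e /=.
  by case: (lab e == d); case: (over e); case: (pos e == s).
have e2 : count (fun e => ~~ over e && (pos e == s)) (filter (fun e => lab e == d) D) = 1%N.
  rewrite count_filter -h2; apply: eq_count => e /=.
  by case: (lab e == d); case: (over e); case: (pos e == s).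
have e3 := size_filter (fun e => lab e == d) D; rewrite h3 in e3.
have ml : forall e, e \in filter (fun e => lab e == d) D -> lab e = d.
  by move=> e; rewrite mem_filter => /andP[/eqP].
move: e1 e2 e3 ml; case: (filter _ D) => [|x [|y [|z r]]] //= e1 e2 _ ml.
exists x, y; split => //; split; first by apply: ml; rewrite inE eqxx.
split; first by apply: ml; rewrite !inE eqxx orbT.
move: e1 e2; clear h1 h2 h3 H; case: x {ml} => lx ox px; case: y => ly oy py /=.
by case: ox; case: px; case: oy; case: py; case: s.
Qed.

Lemma wf_sum0 D d : wf D -> \sum_(e <- D | lab e == d) w e = 0.
Proof.
move=> H; case: (boolP (d \in labels D)) => dl; last exact: sum_none.
have [x [y [f [_ [_ [o p]]]]]] := wf_pair H dl.
rewrite -big_filter f !big_cons big_nil /w o /sgnz p.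
by case: (over x); case: (pos x).
Qed.

Lemma PP_infix p A q : wf (p ++ A ++ q) -> PP A.
Proof.
move=> H z; set D := p ++ A ++ q.
have cD : (count (fun e => lab e == z) D <= 2)%N.
  case: (boolP (z \in labels D)) => zl; first by rewrite (wf_cnt H zl).
  by move: zl; rewrite -cnt0 => /eqP ->.
have cA : (count (fun e => lab e == z) A <= count (fun e => lab e == z) D)%N.
  by rewrite /D !count_cat; lia.
split; first exact: leq_trans cA cD.
move=> c2; have := wf_sum0 z H; rewrite /D !big_cat /=.
have : count (fun e => lab e == z) D = 2%N by apply/eqP; rewrite eqn_leq cD -c2 cA.
rewrite /D !count_cat c2 => e.
have /eqP : count (fun e => lab e == z) p = 0%N by lia.
have /eqP : count (fun e => lab e == z) q = 0%N by lia.
rewrite !cnt0 => nq np.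
by rewrite (sum_none np) (sum_none nq) add0r addr0.
Qed.

Lemma ind_W D d : wf D -> ind D d = Wsum (arc D d).
Proof.
move=> H; rewrite -indA_Wsum //; last first.
  apply: (@PP_infix (take (index d (labels D)).+1 D) _
     (drop (index d (drop (index d (labels D)).+1 (labels D)))
        (drop (index d (labels D)).+1 D))).
  by rewrite /arc !cat_take_drop.
Qed.

Lemma Wsum0 D : wf D -> Wsum D = 0.
Proof.
move=> H; rewrite -indA_Wsum; last by apply: (@PP_infix [::] D [::]); rewrite cats0.
rewrite /indA big_seq_cond big1 // => e /andP[eD].
by rewrite (wf_cnt H (map_f lab eD)).
Qed.

Definition term (D : gcode) (e : passage) : {poly int} :=
  (sgnz e)%:~R * ('X^(absz (Wsum (arc D (lab e)))) - 1).
Definition pt' (D : gcode) : {poly int} := \sum_(e <- D | over e) term D e.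

Lemma pt_pt' D : wf D -> pt D = pt' D.
Proof. by move=> H; apply: eq_bigr => e _; rewrite /term ind_W. Qed.

Lemma cntQ0 (a : pred passage) d (B : gcode) :
  (forall e, a e -> lab e == d) -> d \notin labels B -> count a B = 0%N.
Proof.
move=> Ha dB; rewrite (@eq_in_count _ _ pred0) ?count_pred0 // => e eB /=.
apply/negP => /Ha /eqP le; move: dB; by rewrite -le (map_f lab eB).
Qed.

Lemma labels_perm (D D' : gcode) : perm_eq D D' -> labels D =i labels D'.
Proof. by move=> H; apply: perm_mem; apply: perm_map. Qed.

Lemma wf_perm (D D' : gcode) : perm_eq D D' -> wf D -> wf D'.
Proof.
move=> pe H d; rewrite -(labels_perm pe) => /H [s [h1 [h2 h3]]].
by exists s; rewrite -!(permP pe).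
Qed.

Lemma wf_cat (A B : gcode) : (forall z, z \in labels A -> z \notin labels B) ->
  wf (A ++ B) <-> wf A /\ wf B.
Proof.
move=> dj; split.
  move=> H; split => d dl.
    have nB := dj _ dl.
    have dl' : d \in labels (A ++ B) by rewrite labels_cat mem_cat dl.
    have [s [h1 [h2 h3]]] := H d dl'.
    exists s; move: h1 h2 h3; rewrite !count_cat.
    rewrite (@cntQ0 _ d B) ?(@cntQ0 _ d B) ?(@cntQ0 _ d B) ?addn0 //.
      by move=> e /andP[/andP[]].
    by move=> e /andP[/andP[]].
  have nA : d \notin labels A by apply/negP => /dj; rewrite dl.
  have dl' : d \in labels (A ++ B) by rewrite labels_cat mem_cat dl orbT.
  have [s [h1 [h2 h3]]] := H d dl'.
  exists s; move: h1 h2 h3; rewrite !count_cat.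
  rewrite (@cntQ0 _ d A) ?(@cntQ0 _ d A) ?(@cntQ0 _ d A) ?add0n //.
    by move=> e /andP[/andP[]].
  by move=> e /andP[/andP[]].
move=> [HA HB] d; rewrite labels_cat mem_cat; case/orP => dl.
  have nB := dj _ dl.
  have [s [h1 [h2 h3]]] := HA d dl.
  exists s; rewrite !count_cat h1 h2 h3.
  rewrite (@cntQ0 _ d B) ?(@cntQ0 _ d B) ?(@cntQ0 _ d B) ?addn0 //.
    by move=> e /andP[/andP[]].
  by move=> e /andP[/andP[]].
have nA : d \notin labels A by apply/negP => /dj; rewrite dl.
have [s [h1 [h2 h3]]] := HB d dl.
exists s; rewrite !count_cat h1 h2 h3.
rewrite (@cntQ0 _ d A) ?(@cntQ0 _ d A) ?(@cntQ0 _ d A) ?add0n //.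
  by move=> e /andP[/andP[]].
by move=> e /andP[/andP[]].
Qed.

Lemma arc_Wsum0 u v B x : x \notin labels B -> Wsum B = 0 ->
  Wsum (arc (u ++ B ++ v) x) = Wsum (arc (u ++ v) x).
Proof. by move=> nB W0; rewrite (@arc_Wsum u v B [::]) // Wsum_nil. Qed.

Lemma perm_mid (u B v : gcode) : perm_eq (u ++ B ++ v) (B ++ (u ++ v)).
Proof. by rewrite perm_catCA. Qed.

Lemma wf_iff_perm (D D' : gcode) : perm_eq D D' -> wf D <-> wf D'.
Proof. by move=> pe; split; apply: wf_perm; rewrite // perm_sym. Qed.

Lemma R1_wf D D' : R1 D D' -> (wf D <-> wf D').
Proof.
move=> [u [v [d [o [s [De [D'e nd]]]]]]]; subst.
rewrite (wf_iff_perm (perm_mid _ _ _)) wf_cat; last first.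
  by move=> z; rewrite !inE => /orP[] /eqP ->.
suff : wf [:: Pass d o s; Pass d (~~ o) s] by tauto.
move=> z; rewrite !inE orbb /= => /eqP ->; exists s; rewrite /= eqxx.
by case: o; case: s.
Qed.

Lemma term_arc0 D e : arc D (lab e) = [::] -> term D e = 0.
Proof. by move=> H; rewrite /term H Wsum_nil /= expr0 subrr mulr0. Qed.

Lemma R1_pt D D' : R1 D D' -> pt' D = pt' D'.
Proof.
move=> [u [v [d [o [s [De [D'e nd]]]]]]]; subst.
set B := [:: Pass d o s; Pass d (~~ o) s].
have nu : d \notin labels u by move: nd; rewrite labels_cat mem_cat negb_or => /andP[].
have nv : d \notin labels v by move: nd; rewrite labels_cat mem_cat negb_or => /andP[].
have WB : Wsum B = 0 by rewrite /B /Wsum !big_cons big_nil /w /=; case: (o); case: (s).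
have oth : forall e, lab e != d -> term (u ++ B ++ v) e = term (u ++ v) e.
  by move=> e ne; rewrite /term arc_Wsum0 // /B /labels /= !inE negb_or ne.
have M0 : \sum_(i <- B | over i) term (u ++ B ++ v) i = 0.
  rewrite big_seq_cond big1 // => e /andP[]; rewrite !inE => /orP[] /eqP -> _;
  apply: term_arc0 => /=;
  by rewrite arc_catl // arc_cons /= eqxx pre_cons eqxx.
rewrite /pt' !big_cat /= -/B M0 add0r; congr (_ + _); rewrite big_seq_cond [RHS]big_seq_cond;
  apply: eq_bigr => e /andP[eX _]; apply: oth;
  apply/negP => /eqP le; [move: nu | move: nv]; by rewrite -le (map_f lab eX).
Qed.

Lemma sum_oth (D D' : gcode) (s : gcode) (P : pred passage) :
  {in s, forall e, P e -> term D e = term D' e} ->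
  \sum_(e <- s | P e) term D e = \sum_(e <- s | P e) term D' e.
Proof.
move=> H; rewrite big_seq_cond [RHS]big_seq_cond.
by apply: eq_bigr => e /andP[eX pe]; apply: H.
Qed.

Lemma notin_lab (s : gcode) d e : d \notin labels s -> e \in s -> lab e != d.
Proof. by move=> H eX; apply/negP => /eqP le; move: H; rewrite -le (map_f lab eX). Qed.

Lemma R2_wf D D' : R2 D D' -> (wf D <-> wf D').
Proof.
move=> [u [v [W [x [c [e [s [De [HW [D'e [ne [nc ne']]]]]]]]]]]]; subst.
set B := [:: Pass c true s; Pass e true (~~ s)].
have pe : perm_eq (u ++ B ++ v ++ W ++ x) ((B ++ W) ++ (u ++ v ++ x)).
  by apply/permP => a; rewrite !count_cat; lia.
rewrite (wf_iff_perm pe) wf_cat; last first.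
  move=> z; rewrite /B; case: HW => -> /=; rewrite /labels /= !inE;
  case/or4P => /eqP ->; rewrite -/(labels _) //.
suff : wf (B ++ W) by tauto.
have nec : (e == c) = false by apply/negbTE; rewrite eq_sym.
have nce : (c == e) = false by apply/negbTE.
move=> z; rewrite /B; case: HW => -> /=; rewrite /labels /= !inE;
  case/or4P => /eqP ->;
  first [ by exists s; rewrite /= ?eqxx ?nec ?nce; case: (s); repeat split
        | by exists (~~ s); rewrite /= ?eqxx ?nec ?nce; case: (s); repeat split].
Qed.

Lemma R2_pt D D' : R2 D D' -> pt' D = pt' D'.
Proof.
move=> [u [v [W [x [c [e [s [De [HW [D'e [ne [nc ne']]]]]]]]]]]]; subst.
set B := [:: Pass c true s; Pass e true (~~ s)].
have nec : (e == c) = false by apply/negbTE; rewrite eq_sym.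
have nce : (c == e) = false by apply/negbTE.
have nin : forall z, z \in u ++ v ++ x -> (lab z != c) && (lab z != e).
  by move=> z zX; rewrite (notin_lab nc zX) (notin_lab ne' zX).
have ncu : c \notin labels u by move: nc; rewrite !labels_cat !mem_cat !negb_or => /and3P[].
have ncv : c \notin labels v by move: nc; rewrite !labels_cat !mem_cat !negb_or => /and3P[].
have neu : e \notin labels u by move: ne'; rewrite !labels_cat !mem_cat !negb_or => /and3P[].
have nev : e \notin labels v by move: ne'; rewrite !labels_cat !mem_cat !negb_or => /and3P[].
have WB : Wsum B = 0 by rewrite /B /Wsum !big_cons big_nil /w /=; case: (s).
have WW : Wsum W = 0 by case: HW => ->; rewrite /Wsum !big_cons big_nil /w /=; case: (s).
have oth : forall z, (lab z != c) && (lab z != e) ->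
    term (u ++ B ++ v ++ W ++ x) z = term (u ++ v ++ x) z.
  move=> z /andP[zc ze]; rewrite /term arc_Wsum0 //; last first.
    by rewrite /B /labels /= !inE negb_or zc.
  rewrite catA arc_Wsum0 // -?catA //.
  by case: HW => -> ; rewrite /labels /= !inE !negb_or zc ze.
have W0 : \sum_(i <- W | over i) term (u ++ B ++ v ++ W ++ x) i = 0.
  by case: HW => ->; rewrite !big_cons big_nil.
have arcc : Wsum (arc (u ++ B ++ v ++ W ++ x) c) = Wsum (arc (u ++ B ++ v ++ W ++ x) e).
  rewrite [arc (u ++ _) c]arc_catl // [arc (u ++ _) e]arc_catl // /B /= !arc_cons /= eqxx nce pre_cons /= nec.
  rewrite eqxx (@pre_catl c v) // (@pre_catl e v) //.
  case: HW => -> /=; rewrite !pre_cons /= ?eqxx ?nec ?nce /= ?eqxx ?pre_cons /= ?eqxx;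
  rewrite ?Wsum_cons ?Wsum_cat ?Wsum_cons ?Wsum_nil /w /sgnz /=; case: (s) => /=; ring.
have B0 : \sum_(i <- B | over i) term (u ++ B ++ v ++ W ++ x) i = 0.
  set DD := u ++ B ++ v ++ W ++ x in arcc *.
  rewrite /B !big_cons big_nil /= /term /= -arcc /sgnz; case: (s) => /=; ring.
rewrite /pt' !big_cat /= -/B W0 B0 add0r add0r.
by congr (_ + (_ + _)); apply: sum_oth => z zX _; apply: oth; apply: nin;
  rewrite !mem_cat zX ?orbT.
Qed.

Ltac simparc :=
  repeat (progress (rewrite /= ?arc_cons ?pre_cons /= ?eqxx /=;
     try (rewrite arc_catl; last done);
     try (rewrite pre_catl; last done))).

Lemma R3_shape1 u1 u2 u3 u4 a b c sa sb sc tT tM tB :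
  tT (+) tM = sb (+) sc -> tM (+) tB = sa (+) sb ->
  (a == b) = false -> (b == a) = false -> (a == c) = false ->
  (c == a) = false -> (b == c) = false -> (c == b) = false ->
  a \notin labels u1 -> a \notin labels u2 -> a \notin labels u3 -> a \notin labels u4 ->
  b \notin labels u1 -> b \notin labels u2 -> b \notin labels u3 -> b \notin labels u4 ->
  c \notin labels u1 -> c \notin labels u2 -> c \notin labels u3 -> c \notin labels u4 ->
  forall z, z \in [:: a; b; c] ->
  Wsum (arc (u1 ++ segT a b sa sb tT ++ u2 ++ segM a c sa sc tM ++ u3
             ++ segB b c sb sc tB ++ u4) z) =
  Wsum (arc (u1 ++ segT a b sa sb (~~ tT) ++ u2 ++ segM a c sa sc (~~ tM) ++ u3
             ++ segB b c sb sc (~~ tB) ++ u4) z).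
Proof.
move=> C1 C2 ab ba ac ca bc cb a1 a2 a3 a4 b1 b2 b3 b4 c1 c2 c3 c4 z.
rewrite !inE => /or3P[] /eqP ->; move: C1 C2;
case: tT; case: tM; case: tB; rewrite /segT /segM /segB /=;
  repeat (progress (rewrite /= ?arc_cons ?pre_cons /= ?eqxx ?ab ?ba ?ac ?ca ?bc ?cb /=;
     try (rewrite arc_catl; last done);
     try (rewrite pre_catl; last done))).
all: rewrite ?(Wsum_cons, Wsum_cat, Wsum_nil) /w /sgnz /=.
all: case: sa; case: sb; case: sc => //= _ _; ring.
Qed.

Lemma R3_shape2 u1 u2 u3 u4 a b c sa sb sc tT tM tB :
  tT (+) tM = sb (+) sc -> tM (+) tB = sa (+) sb ->
  (a == b) = false -> (b == a) = false -> (a == c) = false ->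
  (c == a) = false -> (b == c) = false -> (c == b) = false ->
  a \notin labels u1 -> a \notin labels u2 -> a \notin labels u3 -> a \notin labels u4 ->
  b \notin labels u1 -> b \notin labels u2 -> b \notin labels u3 -> b \notin labels u4 ->
  c \notin labels u1 -> c \notin labels u2 -> c \notin labels u3 -> c \notin labels u4 ->
  forall z, z \in [:: a; b; c] ->
  Wsum (arc (u1 ++ segT a b sa sb tT ++ u2 ++ segB b c sb sc tB ++ u3
             ++ segM a c sa sc tM ++ u4) z) =
  Wsum (arc (u1 ++ segT a b sa sb (~~ tT) ++ u2 ++ segB b c sb sc (~~ tB) ++ u3
             ++ segM a c sa sc (~~ tM) ++ u4) z).
Proof.
move=> C1 C2 ab ba ac ca bc cb a1 a2 a3 a4 b1 b2 b3 b4 c1 c2 c3 c4 z.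
rewrite !inE => /or3P[] /eqP ->; move: C1 C2;
case: tT; case: tM; case: tB; rewrite /segT /segM /segB /=;
  repeat (progress (rewrite /= ?arc_cons ?pre_cons /= ?eqxx ?ab ?ba ?ac ?ca ?bc ?cb /=;
     try (rewrite arc_catl; last done);
     try (rewrite pre_catl; last done))).
all: rewrite ?(Wsum_cons, Wsum_cat, Wsum_nil) /w /sgnz /=.
all: case: sa; case: sb; case: sc => //= _ _; ring.
Qed.

Lemma cnt_segT z a b sa sb t :
  count (fun e => lab e == z) (segT a b sa sb t) = ((a == z) + (b == z))%N.
Proof. by case: t; rewrite /= ?addn0 // addnC. Qed.
Lemma cnt_segM z a c sa sc t :
  count (fun e => lab e == z) (segM a c sa sc t) = ((a == z) + (c == z))%N.
Proof. by case: t; rewrite /= ?addn0 // addnC. Qed.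
Lemma cnt_segB z b c sb sc t :
  count (fun e => lab e == z) (segB b c sb sc t) = ((b == z) + (c == z))%N.
Proof. by case: t; rewrite /= ?addn0 // addnC. Qed.

Lemma perm_segT a b sa sb t t' : perm_eq (segT a b sa sb t) (segT a b sa sb t').
Proof. by case: t; case: t' => //; apply/permP => p /=; lia. Qed.
Lemma perm_segM a c sa sc t t' : perm_eq (segM a c sa sc t) (segM a c sa sc t').
Proof. by case: t; case: t' => //; apply/permP => p /=; lia. Qed.
Lemma perm_segB b c sb sc t t' : perm_eq (segB b c sb sc t) (segB b c sb sc t').
Proof. by case: t; case: t' => //; apply/permP => p /=; lia. Qed.

Lemma labels_segT a b sa sb t z : z \in labels (segT a b sa sb t) = (z == a) || (z == b).
Proof. by case: t; rewrite /labels /= !inE // orbC. Qed.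
Lemma labels_segM a c sa sc t z : z \in labels (segM a c sa sc t) = (z == a) || (z == c).
Proof. by case: t; rewrite /labels /= !inE // orbC. Qed.
Lemma labels_segB b c sb sc t z : z \in labels (segB b c sb sc t) = (z == b) || (z == c).
Proof. by case: t; rewrite /labels /= !inE // orbC. Qed.

Lemma R3_facts u1 u2 u3 u4 a b c sa sb sc tT tM tB :
  wf ((segT a b sa sb tT ++ segM a c sa sc tM ++ segB b c sb sc tB) ++
      (u1 ++ u2 ++ u3 ++ u4)) ->
  ((a == b) = false /\ (b == a) = false /\ (a == c) = false /\
      (c == a) = false /\ (b == c) = false /\ (c == b) = false) /\
  (a \notin labels (u1 ++ u2 ++ u3 ++ u4) /\ b \notin labels (u1 ++ u2 ++ u3 ++ u4)
    /\ c \notin labels (u1 ++ u2 ++ u3 ++ u4)).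
Proof.
move=> H.
have la : a \in labels ((segT a b sa sb tT ++ segM a c sa sc tM ++ segB b c sb sc tB) ++
      (u1 ++ u2 ++ u3 ++ u4)) by rewrite !labels_cat !mem_cat labels_segT eqxx.
have lb : b \in labels ((segT a b sa sb tT ++ segM a c sa sc tM ++ segB b c sb sc tB) ++
      (u1 ++ u2 ++ u3 ++ u4)) by rewrite !labels_cat !mem_cat labels_segT eqxx orbT.
have lc : c \in labels ((segT a b sa sb tT ++ segM a c sa sc tM ++ segB b c sb sc tB) ++
      (u1 ++ u2 ++ u3 ++ u4)) by rewrite !labels_cat !mem_cat labels_segM eqxx !orbT.
have := wf_cnt H la; have := wf_cnt H lb; have := wf_cnt H lc.
rewrite !count_cat !cnt_segT !cnt_segM !cnt_segB !eqxx -!cnt0 !count_cat.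
rewrite (eq_sym b a) (eq_sym c a) (eq_sym c b).
case: (a == b); case: (a == c); case: (b == c) => /= h1 h2 h3; repeat split; (try apply/eqP); lia.
Qed.

Lemma arc3 u1 u2 u3 u4 S1 S2 S3 S1' S2' S3' z :
  z \notin labels S1 -> z \notin labels S2 -> z \notin labels S3 ->
  z \notin labels S1' -> z \notin labels S2' -> z \notin labels S3' ->
  Wsum S1 = Wsum S1' -> Wsum S2 = Wsum S2' -> Wsum S3 = Wsum S3' ->
  Wsum (arc (u1 ++ S1 ++ u2 ++ S2 ++ u3 ++ S3 ++ u4) z) =
  Wsum (arc (u1 ++ S1' ++ u2 ++ S2' ++ u3 ++ S3' ++ u4) z).
Proof.
move=> n1 n2 n3 n1' n2' n3' e1 e2 e3.
rewrite (arc_Wsum _ _ n1 n1' e1).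
have E : forall S S', u1 ++ S1' ++ u2 ++ S ++ u3 ++ S' ++ u4 =
   (u1 ++ S1' ++ u2) ++ S ++ (u3 ++ S' ++ u4) by move=> S S'; rewrite !catA.
rewrite !E (arc_Wsum _ _ n2 n2' e2) -!E.
have E2 : forall S, u1 ++ S1' ++ u2 ++ S2' ++ u3 ++ S ++ u4 =
   (u1 ++ S1' ++ u2 ++ S2' ++ u3) ++ S ++ u4 by move=> S; rewrite !catA.
by rewrite !E2 (arc_Wsum _ _ n3 n3' e3).
Qed.

Lemma pt'_perm D D' : perm_eq D D' -> {in D, forall e, term D e = term D' e} ->
  pt' D = pt' D'.
Proof.
move=> pe H; rewrite /pt' -(perm_big _ pe) /=.
by apply: sum_oth => e eD _; apply: H.
Qed.

Lemma R3_perm D D' : R3 D D' -> perm_eq D D'.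
Proof.
move=> [u1 [u2 [u3 [u4 [a [b [c [sa [sb [sc [tT [tM [tB [_ [_ H]]]]]]]]]]]]]]].
case: H => [[-> ->]|[-> ->]]; apply/permP => p; rewrite !count_cat;
rewrite (permP (perm_segT _ _ _ _ tT (~~ tT))) (permP (perm_segM _ _ _ _ tM (~~ tM)))
  (permP (perm_segB _ _ _ _ tB (~~ tB))) //.
Qed.

Lemma R3_wf D D' : R3 D D' -> (wf D <-> wf D').
Proof. by move=> H; apply: wf_iff_perm; apply: R3_perm. Qed.

Lemma term_eq D D' e : Wsum (arc D (lab e)) = Wsum (arc D' (lab e)) -> term D e = term D' e.
Proof. by rewrite /term => ->. Qed.

Lemma R3_pt D D' : wf D -> R3 D D' -> pt' D = pt' D'.
Proof.
move=> wD R; apply: pt'_perm; first exact: R3_perm.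
move: R => [u1 [u2 [u3 [u4 [a [b [c [sa [sb [sc [tT [tM [tB [C1 [C2 H]]]]]]]]]]]]]]].
have F : wf ((segT a b sa sb tT ++ segM a c sa sc tM ++ segB b c sb sc tB) ++
      (u1 ++ u2 ++ u3 ++ u4)).
  apply: wf_perm wD; apply/permP => p.
  by case: H => [[-> _]|[-> _]]; rewrite !count_cat; lia.
have [[ab [ba [ac [ca [bc cb]]]]] [na [nb nc]]] := R3_facts F.
move: na nb nc; rewrite !labels_cat !mem_cat !negb_or.
move=> /and4P[a1 a2 a3 a4] /and4P[b1 b2 b3 b4] /and4P[c1 c2 c3 c4].
move=> e _; apply: term_eq.
case: (boolP (lab e \in [:: a; b; c])) => zin.
  case: H => [[-> ->]|[-> ->]].
    exact: R3_shape1.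
  exact: R3_shape2.
move: zin; rewrite !inE !negb_or => /and3P[za zb zc].
have sT : forall t, lab e \notin labels (segT a b sa sb t).
  by move=> t; rewrite labels_segT negb_or za zb.
have sM : forall t, lab e \notin labels (segM a c sa sc t).
  by move=> t; rewrite labels_segM negb_or za zc.
have sB : forall t, lab e \notin labels (segB b c sb sc t).
  by move=> t; rewrite labels_segB negb_or zb zc.
have wT : Wsum (segT a b sa sb tT) = Wsum (segT a b sa sb (~~ tT)).
  by rewrite /Wsum (perm_big _ (perm_segT _ _ _ _ tT (~~ tT))).
have wM : Wsum (segM a c sa sc tM) = Wsum (segM a c sa sc (~~ tM)).
  by rewrite /Wsum (perm_big _ (perm_segM _ _ _ _ tM (~~ tM))).
have wB : Wsum (segB b c sb sc tB) = Wsum (segB b c sb sc (~~ tB)).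
  by rewrite /Wsum (perm_big _ (perm_segB _ _ _ _ tB (~~ tB))).
by case: H => [[-> ->]|[-> ->]]; apply: arc3.
Qed.

Lemma arc_catr y (s t : gcode) : (2 <= count (fun e => lab e == y) s)%N ->
  arc (s ++ t) y = arc s y.
Proof.
elim: s => //= e s IH; rewrite !arc_cons; case: eqP => /= [_|_] H.
  by rewrite pre_catr // -cnt_gt0.
exact: IH.
Qed.

Lemma Rot_pt D D' : wf D -> Rot D D' -> pt' D = pt' D'.
Proof.
move=> wD ->; case: D wD => [|e s] wD //=.
have pe : perm_eq (e :: s) (rot 1 (e :: s)) by rewrite perm_sym perm_rot.
apply: pt'_perm => // f fD.
rewrite rot1_cons -cats1.
have dl : lab e \in labels (e :: s) by rewrite inE eqxx.
have c2 := wf_cnt wD dl.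
case: (eqVneq (lab f) (lab e)) => [lfe|ne].
  rewrite /term lfe.
  have es : lab e \in labels s.
    by rewrite -cnt_gt0; move: c2; rewrite /= eqxx; case: count.
  have [s1 [e' [s2 [se [le n1]]]]] := split_lab es.
  have n2 : lab e \notin labels s2.
    move: c2; rewrite se /= eqxx count_cat /= le eqxx -cnt0 => H; apply/eqP.
    move: H; rewrite /nat_of_bool; lia.
  have s0 := wf_sum0 (lab e) wD; have W0 := Wsum0 wD.
  rewrite se big_cons eqxx big_cat /= big_cons le eqxx (sum_none n1) (sum_none n2) in s0.
  rewrite se Wsum_cons Wsum_cat Wsum_cons in W0.
  rewrite se arc_cons eqxx pre_catl // pre_cons le eqxx cats0.
  rewrite -catA arc_catl // arc_cons /= le eqxx pre_catl // pre_cons eqxx cats0.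
  have : Wsum s1 = - Wsum s2.
    apply/eqP; rewrite -addr_eq0; apply/eqP.
    move: s0 W0; rewrite add0r addr0 => s0; lra.
  by move=> ->; rewrite abszN.
have ne' : lab e != lab f by rewrite eq_sym.
apply: term_eq; rewrite arc_cons (negbTE ne') arc_catr //.
by have := wf_cnt wD (map_f lab fD); rewrite /= (negbTE ne') add0n => ->.
Qed.

Lemma Relab_wf D D' : Relab D D' -> (wf D <-> wf D').
Proof.
move=> [f [inj ->]]; set g := fun e : passage => Pass (f (lab e)) (over e) (pos e).
have lbl : labels (map g D) = map f (labels D) by rewrite /labels -!map_comp.
have c1 : forall d0 s, count (fun e => (lab e == f d0) && over e && (pos e == s)) (map g D)
    = count (fun e => (lab e == d0) && over e && (pos e == s)) D.
  by move=> d0 s; rewrite count_map; apply: eq_count => e /=; rewrite (inj_eq inj).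
have c2 : forall d0 s, count (fun e => (lab e == f d0) && ~~ over e && (pos e == s)) (map g D)
    = count (fun e => (lab e == d0) && ~~ over e && (pos e == s)) D.
  by move=> d0 s; rewrite count_map; apply: eq_count => e /=; rewrite (inj_eq inj).
have cL : forall d0, count (fun e => lab e == f d0) (map g D) = count (fun e => lab e == d0) D.
  by move=> d0; rewrite count_map; apply: eq_count => e /=; rewrite (inj_eq inj).
split => H d.
  rewrite lbl => /mapP [d0 d0l ->]; have [s [h1 [h2 h3]]] := H d0 d0l.
  by exists s; rewrite cL c1 c2.
move=> dl; have : f d \in labels (map g D) by rewrite lbl map_f.
by move=> /H [s [h1 [h2 h3]]]; exists s; rewrite -cL -c1 -c2.
Qed.

Lemma Relab_pt D D' : Relab D D' -> pt' D = pt' D'.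
Proof.
move=> [f [inj ->]]; set g := fun e : passage => Pass (f (lab e)) (over e) (pos e).
have lbl : labels (map g D) = map f (labels D) by rewrite /labels -!map_comp.
have am : forall d, arc (map g D) (f d) = map g (arc D d).
  by move=> d; rewrite /arc lbl !index_map // -!map_drop index_map // map_take map_drop.
have wm : forall A, Wsum (map g A) = Wsum A.
  by move=> A; rewrite /Wsum big_map.
rewrite /pt' big_map; apply: eq_bigr => e _; rewrite /term /= am wm //.
Qed.

Lemma move_wf D D' : move D D' -> (wf D <-> wf D').
Proof.
case=> [H|[H|[H|[H|H]]]].
- exact: R1_wf.
- exact: R2_wf.
- exact: R3_wf.
- by rewrite H; apply: wf_iff_perm; rewrite perm_sym perm_rot.
- exact: Relab_wf.
Qed.

Lemma move_pt D D' : wf D -> move D D' -> pt D = pt D'.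
Proof.
move=> wD M; have wD' : wf D' by apply/(move_wf M).
rewrite (pt_pt' wD) (pt_pt' wD').
case: M => [H|[H|[H|[H|H]]]].
- exact: R1_pt.
- exact: R2_pt.
- exact: R3_pt.
- exact: Rot_pt.
- exact: Relab_pt.
Qed.

Lemma vk_inv : vk_invariant pt.
Proof.
move=> D D' wD _ V.
suff : (wf D <-> wf D') /\ (wf D -> pt D = pt D') by case => _ ->.
elim: V {wD} => {D D'} [x y M|x|x y _ [IH1 IH2]|x y z _ [I1 I2] _ [J1 J2]].
- by split; [exact: move_wf | move=> w; exact: move_pt].
- by [].
- split; first by tauto.
  by move=> wy; rewrite IH2 //; apply/IH1.
- split; first by tauto.
  by move=> wx; rewrite I2 // J2 //; apply/I1.
Qed.


Definition ccf (x : nat) (e : passage) : passage :=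
  if lab e == x then Pass x (~~ over e) (~~ pos e) else e.

Lemma lab_ccf x e : lab (ccf x e) = lab e.
Proof. by rewrite /ccf; case: eqP => //= ->. Qed.
Lemma w_ccf x e : w (ccf x e) = w e.
Proof. by rewrite /ccf; case: eqP => //= _; rewrite /w /sgnz /=; case: (over e); case: (pos e). Qed.

Lemma labels_cc x D : labels (cchange x D) = labels D.
Proof. rewrite /labels /cchange -map_comp; apply: eq_map => e; exact: lab_ccf. Qed.

Lemma arc_cc x D y : arc (cchange x D) y = map (ccf x) (arc D y).
Proof. by rewrite /arc labels_cc /cchange -map_drop -map_take. Qed.

Lemma ind_cc x D y : ind (cchange x D) y = ind D y.
Proof.
rewrite /ind arc_cc big_map; apply: eq_big => e.
  by rewrite count_map lab_ccf; congr (_ == _); apply: eq_count => e' /=; rewrite lab_ccf.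
by move=> _; have := w_ccf x e; rewrite /w.
Qed.

Lemma wf_cc x D : wf D -> wf (cchange x D).
Proof.
move=> H y; rewrite labels_cc => /H [s [h1 [h2 h3]]].
case: (eqVneq y x) => [yx|ne].
  subst y; exists (~~ s); rewrite /cchange !count_map; split; last split.
  - rewrite -h2; apply: eq_count => e /=; rewrite /ccf.
    case: (eqVneq (lab e) x) => [le|ne'] /=; last by rewrite (negbTE ne').
    by rewrite ?eqxx /=; case: (over e); case: (pos e); case: (s).
  - rewrite -h1; apply: eq_count => e /=; rewrite /ccf.
    case: (eqVneq (lab e) x) => [le|ne'] /=; last by rewrite (negbTE ne').
    by rewrite ?eqxx /=; case: (over e); case: (pos e); case: (s).
  - rewrite -h3; apply: eq_count => e /=; exact: (congr1 (fun l => l == x) (lab_ccf x e)).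
exists s; rewrite /cchange !count_map; split; last split.
- rewrite -h1; apply: eq_count => e /=; rewrite /ccf.
  case: (eqVneq (lab e) x) => [le|ne'] //=.
  by rewrite le eq_sym (negbTE ne).
- rewrite -h2; apply: eq_count => e /=; rewrite /ccf.
  case: (eqVneq (lab e) x) => [le|ne'] //=.
  by rewrite le eq_sym (negbTE ne).
- rewrite -h3; apply: eq_count => e /=; exact: (congr1 (fun l => l == y) (lab_ccf x e)).
Qed.

Lemma wf_res b x D : wf D -> wf (resolve b x D).
Proof. by rewrite /resolve; case: has => // /wf_cc. Qed.
Lemma labels_res b x D : labels (resolve b x D) = labels D.
Proof. by rewrite /resolve; case: has => //; rewrite labels_cc. Qed.
Lemma ind_res b x D y : ind (resolve b x D) y = ind D y.
Proof. by rewrite /resolve; case: has => //; rewrite ind_cc. Qed.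

Lemma sum_cc (Q : nat -> {poly int}) d (L : gcode) :
  \sum_(e <- L | over e) (sgnz e)%:~R * Q (lab e) -
  \sum_(e <- map (ccf d) L | over e) (sgnz e)%:~R * Q (lab e) =
  \sum_(e <- L | lab e == d) (sgnz e)%:~R * Q (lab e).
Proof.
elim: L => [|e L IH] /=; first by rewrite !big_nil subrr.
rewrite !big_cons -IH /ccf; case: (eqVneq (lab e) d) => [->|ne] /=.
  rewrite ?eqxx /sgnz /=; case: (over e); case: (pos e) => /=; rewrite ?mulN1r ?mul1r; ring.
case: (over e) => //=; ring.
Qed.

Lemma pt_cc d D : pt D - pt (cchange d D) =
  (\sum_(e <- D | lab e == d) (sgnz e)%:~R) * ('X^(absz (ind D d)) - 1).
Proof.
have -> : pt (cchange d D) =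
   \sum_(e <- map (ccf d) D | over e) (sgnz e)%:~R * ('X^(absz (ind D (lab e))) - 1).
  by rewrite /pt; apply: eq_bigr => e _; rewrite ind_cc.
rewrite (sum_cc (fun l => 'X^(absz (ind D l)) - 1)) big_distrl /=.
by apply: eq_bigr => e /eqP ->.
Qed.

Lemma res_diff d D : wf D -> d \in labels D ->
  pt (resolve true d D) - pt (resolve false d D) = 2%:R * ('X^(absz (ind D d)) - 1).
Proof.
move=> H dl; have [x [y [f [lx [ly [o p]]]]]] := wf_pair H dl.
have hs : forall b, has (fun e => (lab e == d) && (pos e == b)) D = (pos x == b).
  move=> b; rewrite has_count.
  have -> : count (fun e => (lab e == d) && (pos e == b)) D =
            count (fun e => pos e == b) (filter (fun e => lab e == d) D).
    by rewrite count_filter; apply: eq_count => e /=; rewrite andbC.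
  by rewrite f /= p; case: (pos x == b).
have sg : \sum_(e <- D | lab e == d) ((sgnz e)%:~R : {poly int}) = 2%:R * (sgnz x)%:~R.
  rewrite -big_filter f !big_cons big_nil /sgnz p; case: (pos x); rewrite /=; ring.
rewrite /resolve !hs; case E: (pos x) => /=.
  by rewrite pt_cc sg /sgnz E mulr1.
rewrite -opprB pt_cc sg /sgnz E /=; ring.
Qed.

Lemma has_cc x d b D : x != d ->
  has (fun e => (lab e == d) && (pos e == b)) (cchange x D) =
  has (fun e => (lab e == d) && (pos e == b)) D.
Proof.
move=> ne; rewrite /cchange has_map; apply: eq_has => e /=; rewrite /ccf.
case: (eqVneq (lab e) x) => [le|ne'] //=.
by rewrite le (negbTE ne).
Qed.

Lemma cc_comm x d D : cchange x (cchange d D) = cchange d (cchange x D).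
Proof.
rewrite /cchange -!map_comp; apply: eq_map => e /=; rewrite /ccf.
case: (eqVneq (lab e) x) => [le|ne] /=; case: (eqVneq (lab e) d) => [le'|ne'] //=.
- have xd : x = d by rewrite -le le'.
  by rewrite xd eqxx.
- by rewrite le eqxx; move: ne'; rewrite le => /negbTE ->.
- by move: ne; rewrite le' => /negbTE ->.
- by rewrite (negbTE ne).
Qed.

Lemma res_comm b b' x d D : x != d ->
  resolve b d (resolve b' x D) = resolve b' x (resolve b d D).
Proof.
move=> ne; have ne' : d != x by rewrite eq_sym.
rewrite /resolve; case H1: (has _ D); case H2: (has _ D);
  by rewrite ?has_cc ?H1 ?H2 // cc_comm.
Qed.

Lemma vext_res (V : gcode -> {poly int}) b d D M : d \notin M ->
  vext V (resolve b d D) M = vext (fun D => V (resolve b d D)) D M.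
Proof.
elim: M D => [|x M IH] D //=; rewrite inE negb_or => /andP[ne nM].
have nx : x != d by rewrite eq_sym.
rewrite -(@res_comm b true x d D nx) -(@res_comm b false x d D nx).
by rewrite !IH.
Qed.

Lemma vextB (V1 V2 : gcode -> {poly int}) D M :
  vext (fun D => V1 D - V2 D) D M = vext V1 D M - vext V2 D M.
Proof. elim: M D => [|x M IH] D //=; rewrite !IH; ring. Qed.

Lemma vext_const (h : gcode -> {poly int}) (Q : gcode -> Prop) (M : seq nat) D :
  Q D -> (forall x b D, x \in M -> Q D -> Q (resolve b x D) /\ h (resolve b x D) = h D) ->
  M != [::] -> vext h D M = 0.
Proof.
elim: M D => [|x M IH] D // qD Hh _ /=.
have Hh' : forall y b D, y \in M -> Q D -> Q (resolve b y D) /\ h (resolve b y D) = h D.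
  by move=> y b D' yM; apply: Hh; rewrite inE yM orbT.
have [q1 e1] := Hh x true D (mem_head _ _) qD.
have [q2 e2] := Hh x false D (mem_head _ _) qD.
clear Hh; case: M IH Hh' => [|y M] IH Hh'; first by rewrite /= e1 e2 subrr.
by rewrite !IH // subrr.
Qed.

Lemma vass1 : vassiliev_le pt 1.
Proof.
move=> D [|d [|d' M]] // wD uM aM _.
move: uM aM; rewrite [uniq _]/= [all _ _]/= => /andP[ndM uM] /andP[dl aM].
have -> : vext pt D (d :: d' :: M) =
  vext pt (resolve true d D) (d' :: M) - vext pt (resolve false d D) (d' :: M) by [].
rewrite !(vext_res pt) // -vextB.
apply: (@vext_const _ (fun D => wf D /\ d \in labels D)) => //.
move=> x b D0 xM [w0 l0].
have nx : x != d by apply/negP => /eqP xd; move: ndM; rewrite -xd xM.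
split; first by split; [exact: wf_res | rewrite labels_res].
rewrite (res_diff (@wf_res b x D0 w0)); last by rewrite labels_res.
by rewrite res_diff // ind_res.
Qed.

Definition D0 : gcode := [:: Pass 1 true true; Pass 2 true true; Pass 1 false true; Pass 2 false true].

Lemma wfD0 : wf D0.
Proof.
move=> d; rewrite /labels /= !inE => /or4P[] /eqP ->; exists true; by repeat split.
Qed.

Lemma indD0 : ind D0 1%N = 1.
Proof. by rewrite /ind /arc /= big_cons big_nil. Qed.

Lemma not_vass0 : ~ vassiliev_le pt 0.
Proof.
move=> H; have := H D0 [:: 1%N] wfD0 isT isT isT.
rewrite /= res_diff //; last exact: wfD0.
rewrite indD0 /= expr1 => /(congr1 (fun p => p.[0])).
by rewrite !hornerE.
Qed.


Theorem mainTheorem2 :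
  vk_invariant pt /\ vassiliev_le pt 1 /\ ~ vassiliev_le pt 0.
Proof.
split; first exact: vk_inv.
split; first exact: vass1.
exact: not_vass0.
Qed.
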